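(* Let $n=4k$ with $k\ge2$, let $u_1,\ldots,u_k\in\mathbb{F}_{2^{2k}}^*$ satisfy $u_iu_j^{2^k}\in\mathbb{F}_{2^k}^*$ for all $1\le i<j\le k$, and let $\omega$ be a generator of the cyclic group $U=\{x\in\mathbb{F}_{2^{2k}}: x^{2^k+1}=1\}$. Let $t$ be a positive integer, $F_1,\ldots,F_t$ reduced polynomials in $\mathbb{F}_2[X_1,\ldots,X_k]$, and $f_i(x)=F_i(\mathrm{Tr}^n_1(u_1x),\ldots,\mathrm{Tr}^n_1(u_kx))$. Then $\widehat H(x)=(\mathrm{Tr}^n_k(\omega x^{2^k+1}),f_1(x),\ldots,f_t(x))$ is a vectorial plateaued $(n,k+t)$-function if and only if the $(n,t)$-function $(f_1,\ldots,f_t)$ is vectorial plateaued.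
   Context: $\mathrm{Tr}^m_1(x)=\sum_{i=0}^{m-1}x^{2^i}$, $\mathrm{Tr}^{4k}_k(x)=x+x^{2^k}+x^{2^{2k}}+x^{2^{3k}}$. $\widehat H:\mathbb{F}_{2^n}\to\mathbb{F}_{2^k}\times\mathbb{F}_2^t$ has components $\mathrm{Tr}^k_1(\lambda\,\mathrm{Tr}^n_k(\omega x^{2^k+1}))+\sum_iv_if_i(x)$, $(\lambda,v)\ne(0,0)$. A Boolean function $f$ is plateaued if $W_f(a)=\sum_x(-1)^{f(x)+\mathrm{Tr}^n_1(ax)}$ takes values in $\{0,\pm2^s\}$ for some $n/2\le s\le n$; a vectorial function is vectorial plateaued if all its components are plateaued. A reduced polynomial is a multilinear polynomial over $\mathbb{F}_2$. *)

(* Defs.v *)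
From HB Require Import structures.
From mathcomp Require Import all_boot all_order all_algebra all_field.
From mathcomp Require Import mpoly.
Set Implicit Arguments. Unset Strict Implicit. Unset Printing Implicit Defensive.
Import GRing.Theory.
Local Open Scope ring_scope.

Section Defs.
Variable L : finFieldType.

Definition tr1 (m : nat) (x : L) : L := \sum_(i < m) x ^+ (2 ^ i).

Definition trrel (m k : nat) (x : L) : L := \sum_(i < m %/ k) x ^+ (2 ^ (k * i)).

(* Walsh transform of a Boolean function f : F_{2^n} -> F_2 (n = degree of L) *)
Definition walsh (n : nat) (f : L -> bool) (a : L) : int :=
  \sum_(x : L) (-1) ^+ (f x (+) (tr1 n (a * x) != 0)).

Definition plateaued (n : nat) (f : L -> bool) : Prop :=
  exists s : nat, (n <= 2 * s)%N /\ (s <= n)%N /\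
    forall a : L, walsh n f a = 0 \/ walsh n f a = (2 ^ s)%:Z \/
                  walsh n f a = - (2 ^ s)%:Z.

Definition bcomb (t : nat) (v : 'I_t -> bool) (fs : 'I_t -> L -> bool) (x : L) : bool :=
  \big[addb/false]_(i < t) (v i && fs i x).

Definition vplateaued (n t : nat) (fs : 'I_t -> L -> bool) : Prop :=
  forall v : 'I_t -> bool, (exists i, v i) -> plateaued n (bcomb v fs).

(* the (n,k+t)-function Hhat(x) = (Tr^n_k(w x^(2^k+1)), f_1(x), ..., f_t(x)),
   with components Tr^k_1(lam Tr^n_k(w x^(2^k+1))) + sum_i v_i f_i(x),
   lam in F_{2^k}, v in F_2^t, (lam,v) <> (0,0) *)
Definition Hhat_component (n k t : nat) (w : L) (fs : 'I_t -> L -> bool)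
    (lam : L) (v : 'I_t -> bool) (x : L) : bool :=
  (tr1 k (lam * trrel n k (w * x ^+ (2 ^ k + 1))) != 0) (+) bcomb v fs x.

Definition Hhat_vplateaued (n k t : nat) (w : L) (fs : 'I_t -> L -> bool) : Prop :=
  forall (lam : L) (v : 'I_t -> bool),
    lam ^+ (2 ^ k) = lam -> (lam != 0 \/ exists i, v i) ->
    plateaued n (Hhat_component n k w fs lam v).

End Defs.

Definition reduced (k : nat) (P : {mpoly 'F_2[k]}) : Prop :=
  forall m, m \in msupp P -> forall i : 'I_k, (m i <= 1)%N.

(* f(x) = F(Tr^n_1(u_1 x), ..., Tr^n_1(u_k x)); Tr^n_1 values in F_2 = {0,1} *)
Definition fF (L : finFieldType) (n k : nat) (u : 'I_k -> L) (P : {mpoly 'F_2[k]})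
    (x : L) : bool :=
  P.@[fun j : 'I_k => ((tr1 n (u j * x) != 0 : bool)%:R : 'F_2)] != 0.

(* Main.v *)
Require Import Defs.
From HB Require Import structures.
From mathcomp Require Import all_boot all_order all_algebra all_field.
From mathcomp Require Import mpoly.
From mathcomp Require Import zify ring.
From Stdlib Require Import FunctionalExtensionality.
Set Implicit Arguments. Unset Strict Implicit. Unset Printing Implicit Defensive.
Import GRing.Theory.
Local Open Scope ring_scope.

Section Basic.
Variable L : finFieldType.
Variable n : nat.
Hypothesis hL : #|L| = (2 ^ n)%N.
Hypothesis hn : (0 < n)%N.

Lemma char2 : (1 + 1 : L) = 0.
Proof.
have h : (-1 : L) ^+ #|L| = -1 by rewrite expf_card.
move: h; rewrite hL -(prednK hn) expnS exprM sqrrN !expr1n => h.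
by rewrite {2}h subrr.
Qed.

Lemma addxx (x : L) : x + x = 0.
Proof. by rewrite -[x]mulr1 -mulrDr char2 mulr0. Qed.

Lemma oppL (x : L) : - x = x.
Proof. by apply/eqP; rewrite eq_sym -subr_eq0 opprK addxx. Qed.

Lemma frob2 (x y : L) : (x + y) ^+ 2 = x ^+ 2 + y ^+ 2.
Proof. by rewrite sqrrD mulr2n addxx addr0. Qed.

Lemma frob (m : nat) (x y : L) : (x + y) ^+ (2 ^ m) = x ^+ (2 ^ m) + y ^+ (2 ^ m).
Proof.
elim: m => [|m IH]; first by rewrite !expr1.
by rewrite expnS mulnC !exprM IH frob2.
Qed.

Lemma frob_sum (m : nat) I (r : seq I) (P : pred I) (F : I -> L) :
  (\sum_(i <- r | P i) F i) ^+ (2 ^ m) = \sum_(i <- r | P i) F i ^+ (2 ^ m).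
Proof.
apply: (big_morph (fun x => x ^+ (2 ^ m))); first by move=> x y; exact: frob.
by rewrite expr0n expn_eq0.
Qed.

Lemma xpown (x : L) : x ^+ (2 ^ n) = x.
Proof. by rewrite -hL expf_card. Qed.

Lemma xpow_mod (x : L) j : x ^+ (2 ^ (n + j)) = x ^+ (2 ^ j).
Proof. by rewrite expnD exprM xpown. Qed.

Definition Tr (x : L) := tr1 n x.

Lemma Tr_add x y : Tr (x + y) = Tr x + Tr y.
Proof. by rewrite /Tr /tr1 -big_split /=; apply: eq_bigr => i _; rewrite frob. Qed.

Lemma Tr_nat x : Tr x = \sum_(0 <= i < n) x ^+ (2 ^ i).
Proof. by rewrite /Tr /tr1 big_mkord. Qed.

Lemma Tr_sq x : Tr x ^+ 2 = Tr x.
Proof.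
rewrite Tr_nat -[2%N]/(2 ^ 1)%N frob_sum.
under eq_bigr => i _ do rewrite -exprM -expnD addnC.
rewrite -(prednK hn) big_nat_recr //= big_nat_recl //= -[(2^1)%N]/2%N -/(2 ^ n.-1.+1)%N.
rewrite add1n -/(n.-1.+1) (prednK hn) xpown expr1 addrC; congr (_ + _).
Qed.

Lemma Tr_x2 x : Tr (x ^+ 2) = Tr x.
Proof.
rewrite -[RHS]Tr_sq /Tr /tr1 -[2%N]/(2 ^ 1)%N frob_sum; apply: eq_bigr => i _.
by rewrite -!exprM mulnC.
Qed.

Lemma Tr_pow x j : Tr (x ^+ (2 ^ j)) = Tr x.
Proof.
elim: j => [|j IH]; first by rewrite expr1.
by rewrite expnS mulnC exprM Tr_x2.
Qed.

Lemma Tr01 x : Tr x = 0 \/ Tr x = 1.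
Proof.
have h : Tr x * (Tr x - 1) = 0 by rewrite mulrBr mulr1 -expr2 Tr_sq subrr.
move/eqP: h; rewrite mulf_eq0 subr_eq0 => /orP[] /eqP; tauto.
Qed.

Lemma Tr_nonzero : exists x, Tr x != 0.
Proof.
apply/existsP; apply: contraT; rewrite negb_exists => /forallP h0.
pose q : {poly L} := \sum_(i < n.-1) 'X^(2 ^ i).
pose p : {poly L} := q + 'X^(2 ^ n.-1).
have sq : (size q <= 2 ^ n.-1)%N.
  apply: leq_trans (size_sum _ _ _) _; apply/bigmax_leqP => i _.
  by rewrite size_polyXn ltn_exp2l.
have sp : size p = (2 ^ n.-1).+1.
  by rewrite /p addrC size_addl size_polyXn // ltnS.
have pE x : p.[x] = Tr x.
  have E : forall m, (0 < m)%N -> \sum_(i < m) x ^+ (2 ^ i) =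
      \sum_(i < m.-1) x ^+ (2 ^ i) + x ^+ (2 ^ m.-1).
    by case=> // m _; rewrite big_ord_recr.
  rewrite /p /Tr /tr1 (E n hn) hornerD horner_sum hornerXn.
  by congr (_ + _); apply: eq_bigr => i _; rewrite hornerXn.
have := @max_poly_roots _ p (enum L).
rewrite -size_poly_eq0 sp enum_uniq -cardE hL /= => /(_ isT).
have -> : all (root p) (enum L).
  by apply/allP => x _; rewrite /root pE; have := h0 x; rewrite negbK.
move=> /(_ isT); rewrite -{1}(prednK hn) expnS ltnS mul2n -addnn.
move/(_ isT); rewrite -{3}[(2 ^ n.-1)%N]add0n leq_add2r leqn0 expn_eq0.
by [].
Qed.

Definition chi (x : L) : int := (-1) ^+ (Tr x != 0).

Lemma Tr_bool x y : (Tr (x + y) != 0) = (Tr x != 0) (+) (Tr y != 0).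
Proof.
rewrite Tr_add; have one0 : (1 : L) != 0 := oner_neq0 _.
case: (Tr01 x) => ->; case: (Tr01 y) => ->;
  rewrite ?addr0 ?add0r ?eqxx ?one0 ?char2 ?eqxx //.
Qed.

Lemma chiD x y : chi (x + y) = chi x * chi y.
Proof. by rewrite /chi Tr_bool signr_addb. Qed.

Lemma chi0 : chi 0 = 1.
Proof. by rewrite /chi /Tr /tr1 big1 ?eqxx // => i _; rewrite expr0n expn_eq0. Qed.

Lemma sum_chi (b : L) : \sum_x chi (b * x) = if b == 0 then (2 ^ n)%:R else 0.
Proof.
case: eqP => [->|/eqP bn0].
  under eq_bigr => x _ do rewrite mul0r chi0.
  rewrite sumr_const; congr (_%:R); rewrite -hL; exact: eq_card.
have [x0 hx0] := Tr_nonzero.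
pose S := \sum_x chi (b * x).
have : S = - S.
  rewrite {1}/S (reindex_inj (addrI (x0 / b))) /=.
  rewrite /S -sumrN; apply: eq_bigr => x _.
  rewrite mulrDr mulrC divfK // chiD /chi.
  by rewrite hx0 expr1 mulN1r.
move=> h; have /eqP : S * 2 = 0 by rewrite mulr_natr mulr2n {1}h addNr.
by rewrite mulf_eq0 orbF => /eqP.
Qed.

Definition sg (b : bool) : int := (-1) ^+ b.

Lemma sg_sq b : sg b * sg b = 1.
Proof. by case: b; rewrite /sg ?expr1 ?expr0 ?mulr1 // mulrNN mulr1. Qed.

Lemma walshE (h : L -> bool) a : walsh n h a = \sum_x sg (h x) * chi (a * x).
Proof. by apply: eq_bigr => x _; rewrite signr_addb. Qed.

Lemma parseval (h : L -> bool) :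
  \sum_a walsh n h a ^+ 2 = ((2 ^ n)%:R * (2 ^ n)%:R : int).
Proof.
have E a : walsh n h a ^+ 2 =
    \sum_x \sum_y sg (h x) * sg (h y) * chi ((x + y) * a).
  rewrite expr2 !walshE mulr_suml; apply: eq_bigr => x _.
  rewrite mulr_sumr; apply: eq_bigr => y _.
  by rewrite mulrDl chiD mulrACA ![_ * a]mulrC.
under eq_bigr => a _ do rewrite E.
rewrite exchange_big /=.
have -> : \sum_x \sum_a \sum_y sg (h x) * sg (h y) * chi ((x + y) * a) =
    \sum_(x : L) ((2 ^ n)%:R : int).
  apply: eq_bigr => x _; rewrite exchange_big /=.
  rewrite (bigD1 x) //= [X in _ + X]big1 ?addr0.
    by rewrite -mulr_sumr sum_chi addxx eqxx sg_sq mul1r.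
  move=> y hy; rewrite -mulr_sumr sum_chi.
  case: eqP => [e|]; last by rewrite mulr0.
  by move: hy e; rewrite -(addxx x) => /eqP hy /addrI.
rewrite sumr_const (@eq_card _ _ L) // hL.
by rewrite mulr_natr.
Qed.

End Basic.

Lemma sum_split (R : nmodType) (F : nat -> R) k q :
  \sum_(0 <= m < k * q) F m = \sum_(0 <= i < q) \sum_(0 <= j < k) F (k * i + j)%N.
Proof.
elim: q => [|q IH]; first by rewrite muln0 !big_geq.
rewrite big_nat_recr //= -IH mulnS addnC (big_cat_nat _ (n := k * q)) ?leq_addr //=.
congr (_ + _); rewrite -{1}[(k * q)%N]add0n big_addn addKn.
by apply: eq_bigr => j _; rewrite addnC.
Qed.


Section Main.
Variable L : finFieldType.
Variable k : nat.
Hypothesis hk : (0 < k)%N.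
Hypothesis hL : #|L| = (2 ^ (4 * k))%N.

Let n := (4 * k)%N.
Let hn : (0 < n)%N. Proof. by rewrite /n muln_gt0. Qed.

Notation Tr := (@Tr L n).
Let hL' : #|L| = (2 ^ n)%N := hL.

Lemma xp4 (y : L) : y ^+ (2 ^ (4 * k)) = y.
Proof. exact: (xpown hL' y). Qed.

Lemma pow_fix (x : L) j m : x ^+ (2 ^ j) = x -> x ^+ (2 ^ (j * m)) = x.
Proof.
move=> h; elim: m => [|m IH]; first by rewrite muln0 expr1.
by rewrite mulnS expnD exprM h IH.
Qed.



Lemma trrelE (lam y : L) : lam ^+ (2 ^ k) = lam ->
  tr1 k (lam * trrel n k y) = Tr (lam * y).
Proof.
move=> hl; rewrite /trrel /n mulnK // /Tr /tr1.
have -> : lam * \sum_(i < 4) y ^+ (2 ^ (k * i)) = \sum_(i < 4) (lam * y) ^+ (2 ^ (k * i)).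
  by rewrite mulr_sumr; apply: eq_bigr => i _; rewrite exprMn (pow_fix i hl).
under eq_bigr => j _ do rewrite (frob_sum hL' hn).
rewrite exchange_big /=.
rewrite /n -(big_mkord xpredT (fun m => (lam * y) ^+ (2 ^ m))) mulnC sum_split.
rewrite big_mkord; apply: eq_bigr => i _.
rewrite big_mkord.
by apply: eq_bigr => j _; rewrite -exprM -expnD addnC.
Qed.


Lemma TrK0 (z : L) : z ^+ (2 ^ (2 * k)) = z -> Tr z = 0.
Proof.
move=> hz; rewrite /Tr /tr1 /n -(big_mkord xpredT (fun m => z ^+ (2 ^ m))).
rewrite (_ : (4 * k = (2 * k) * 2)%N); last by rewrite mulnAC.
rewrite sum_split big_nat_recr //= big_nat1 /= muln0 muln1.
rewrite [X in _ + X](eq_bigr (fun j => z ^+ (2 ^ j))) ?(addxx hL' hn) //.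
by move=> j _; rewrite expnD exprM hz.
Qed.


Variables (w lam : L).
Hypothesis hw1 : w ^+ (2 ^ (2 * k)) = w.
Hypothesis hw2 : w ^+ (2 ^ k + 1) = 1.
Hypothesis hw3 : w != 1.
Hypothesis hl1 : lam ^+ (2 ^ k) = lam.
Hypothesis hl0 : lam != 0.

Lemma w0 : w != 0.
Proof. apply/eqP => h; move: hw2; rewrite h expr0n addn1 /= => /eqP; by rewrite eq_sym oner_eq0. Qed.

Lemma winv : w ^+ (2 ^ k) = w^-1.
Proof.
have h : w * w ^+ (2 ^ k) = 1 by rewrite -exprS -addn1.
by rewrite -[RHS]mulr1 -h (mulKf w0).
Qed.


Lemma winvK : w^-1 ^+ (2 ^ k) = w.
Proof. by rewrite exprVn winv invrK. Qed.

Lemma w3k : w ^+ (2 ^ (3 * k)) = w^-1.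
Proof. rewrite (_ : 3 * k = 2 * k + k)%N; last lia. by rewrite expnD exprM hw1 winv. Qed.

Lemma wpwinv : w + w^-1 != 0.
Proof.
apply: contraNneq hw3 => h.
have : (w + 1) ^+ 2 = 0.
  by rewrite (frob2 hL' hn) expr1n -[1](divff w0) expr2 -mulrDr h mulr0.
move/eqP; rewrite expf_eq0 /= => /eqP h1.
by rewrite -(oppL hL' hn 1) -addr_eq0 h1.
Qed.


Definition cc := lam * w.
Definition Q (x : L) := cc * x ^+ (2 ^ k + 1).
Definition Lz (z : L) := cc * z ^+ (2 ^ k) + (cc * z) ^+ (2 ^ (3 * k)).
Definition g (x : L) := Tr (Q x) != 0.

Lemma Tr_Q_add x z : Tr (Q (x + z)) = Tr (Q x + (Q z + x * Lz z)).
Proof.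
have E : Q (x + z) = Q x + (Q z + (x * (cc * z ^+ (2 ^ k)) + (cc * z) * x ^+ (2 ^ k))).
  have eS y : y ^+ (2 ^ k + 1) = y * y ^+ (2 ^ k) by rewrite addn1 exprS.
  rewrite /Q !eS (frob hL' hn k x z).
  move: (x ^+ (2 ^ k)) (z ^+ (2 ^ k)) cc => X Z C; ring.
rewrite E /Lz mulrDr !(Tr_add hL' hn); congr (_ + (_ + (_ + _))).
rewrite -(Tr_pow hL' hn _ (3 * k)) exprMn -exprM -expnD.
rewrite (_ : (k + 3 * k = 4 * k)%N); last by lia.
by rewrite xp4 mulrC.
Qed.


Lemma g_add x z : g (x + z) = g x (+) g z (+) (Tr (x * Lz z) != 0).
Proof. by rewrite /g Tr_Q_add !(Tr_bool hL' hn) addbA. Qed.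

Lemma lam2 : lam ^+ (2 ^ (2 * k)) = lam.
Proof. by rewrite mulnC (pow_fix 2 hl1). Qed.

Lemma lam3 : lam ^+ (2 ^ (3 * k)) = lam.
Proof. by rewrite mulnC (pow_fix 3 hl1). Qed.

Lemma twice2k (t : L) : t ^+ (2 ^ (2 * k)) ^+ (2 ^ (2 * k)) = t.
Proof. by rewrite -exprM -expnD (_ : (2 * k + 2 * k = 4 * k)%N) ?xp4 //; lia. Qed.

Lemma LzE z : Lz z = lam * (w * z ^+ (2 ^ k) + w^-1 * z ^+ (2 ^ k) ^+ (2 ^ (2 * k))).
Proof.
rewrite /Lz /cc !exprMn lam3 w3k -exprM -expnD (_ : (k + 2 * k = 3 * k)%N); last lia.
by rewrite mulrDr !mulrA.
Qed.


Lemma Lz_add a b : Lz (a + b) = Lz a + Lz b.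
Proof.
rewrite /Lz mulrDr (frob hL' hn) (frob hL' hn) mulrDr.
by rewrite addrACA.
Qed.


Lemma key_inj (y yb : L) : w * y + w^-1 * yb = 0 -> w * yb + w^-1 * y = 0 -> y = 0.
Proof.
have wn := w0.
move=> h1 h2.
have e1 : yb = w * (w * y + w^-1 * yb) - w ^+ 2 * y by field.
rewrite h1 mulr0 sub0r in e1.
have e2 : (1 - w ^+ 4) * y = w * (w * yb + w^-1 * y) by rewrite e1; field.
rewrite h2 mulr0 in e2.
move/eqP: e2; rewrite mulf_eq0 => /orP[|/eqP //].
rewrite (oppL hL' hn) => /eqP h.
have : (w + 1) ^+ (2 ^ 2) = 0 by rewrite (frob hL' hn) expr1n addrC.
move/eqP; rewrite expf_eq0 /= => /eqP h3.
by move: hw3; rewrite -(oppL hL' hn 1) -addr_eq0 h3 eqxx.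
Qed.


Lemma Lz_inj0 z : Lz z = 0 -> z = 0.
Proof.
rewrite LzE => /eqP; rewrite mulf_eq0 (negbTE hl0) /= => /eqP h1.
have h2 : w * (z ^+ (2 ^ k)) ^+ (2 ^ (2 * k)) + w^-1 * z ^+ (2 ^ k) = 0.
  have := congr1 (fun t => t ^+ (2 ^ (2 * k))) h1 => /=.
  rewrite (frob hL' hn) !exprMn exprVn hw1 twice2k expr0n expn_eq0 /= => ->.
  by [].
have := key_inj h1 h2 => /eqP; rewrite expf_eq0 => /andP[_ /eqP //].
Qed.


Lemma Lz_inj : injective Lz.
Proof.
move=> a b h.
have : Lz (a + b) = 0 by rewrite Lz_add h (addxx hL' hn).
move/Lz_inj0/eqP; rewrite addr_eq0 (oppL hL' hn) => /eqP //.
Qed.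


Definition mu := (lam * (w + w^-1))^-1.

Lemma mu_fix : mu ^+ (2 ^ k) = mu.
Proof.
rewrite /mu exprVn exprMn hl1 (frob hL' hn) winv winvK.
by rewrite addrC.
Qed.


Lemma Lz_e s : s ^+ (2 ^ (2 * k)) = s -> Lz (mu * s ^+ (2 ^ k)) = s.
Proof.
move=> hs.
have E1 : (mu * s ^+ (2 ^ k)) ^+ (2 ^ k) = mu * s.
  by rewrite exprMn mu_fix -exprM -expnD addnn -mul2n hs.
have mu2 : mu ^+ (2 ^ (2 * k)) = mu by rewrite mulnC (pow_fix 2 mu_fix).
rewrite LzE E1 exprMn mu2 hs.
have -> : lam * (w * (mu * s) + w^-1 * (mu * s)) = (lam * (w + w^-1)) * mu * s.
  by move: mu => M; ring.
rewrite /mu divff ?mul1r //.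
by rewrite mulf_neq0 // wpwinv.
Qed.


Lemma g_K e : e ^+ (2 ^ (2 * k)) = e -> g e = false.
Proof.
move=> he; rewrite /g TrK0 ?eqxx //.
by rewrite /Q /cc !exprMn lam2 hw1 exprAC he.
Qed.


Definition Wg0 := \sum_(x : L) sg (g x).

Lemma walsh_shift (f : L -> bool) z :
  \sum_x sg (g x (+) f x) * chi n (Lz z * x) =
  sg (g z) * \sum_y sg (g y) * sg (f (y + z)).
Proof.
have E x : sg (g x (+) f x) * chi n (Lz z * x) = sg (g z) * (sg (g (x + z)) * sg (f x)).
  rewrite g_add /chi /Tr [Lz z * x]mulrC /sg !signr_addb.
  have hA := sg_sq (g z); rewrite /sg in hA.
  move: ((-1) ^+ g z) hA ((-1) ^+ g x) ((-1) ^+ f x) ((-1) ^+ (tr1 n (x * Lz z) != 0)) => A hA B C D.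
  rewrite -[LHS]mul1r -hA; ring.
under eq_bigr => x _ do rewrite E.
rewrite -mulr_sumr; congr (_ * _).
rewrite (reindex_inj (addIr z)) /=; apply: eq_bigr => y _.
by rewrite -addrA (addxx hL' hn) addr0.
Qed.


Lemma Wg_K s : s ^+ (2 ^ (2 * k)) = s -> \sum_x sg (g x) * chi n (s * x) = Wg0.
Proof.
move=> hs.
have E := walsh_shift (fun _ => false) (mu * s ^+ (2 ^ k)).
rewrite Lz_e // in E.
under eq_bigr => x _ do rewrite -[g x]addbF.
rewrite E g_K; last first.
  by rewrite exprMn exprAC hs mulnC (pow_fix 2 mu_fix).
rewrite /sg expr0 mul1r /Wg0; apply: eq_bigr => y _; by rewrite mulr1.
Qed.


Variable u : 'I_k -> L.
Hypothesis hu : forall i, u i ^+ (2 ^ (2 * k)) = u i.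

Definition dot (c d : {ffun 'I_k -> bool}) : bool := \big[addb/false]_i (c i && d i).
Definition Tv (y : L) : {ffun 'I_k -> bool} := [ffun j => Tr (u j * y) != 0].
Definition sc (c : {ffun 'I_k -> bool}) : L := \sum_(i | c i) u i.

Lemma card_B : #|{: {ffun 'I_k -> bool}}| = (2 ^ k)%N.
Proof. by rewrite card_ffun card_bool card_ord. Qed.

Lemma sum_sg_dot e : \sum_(c : {ffun 'I_k -> bool}) sg (dot c e) =
  if e == [ffun => false] then (2 ^ k)%:R else 0.
Proof.
case: eqP => [->|/eqP ne].
  rewrite (eq_bigr (fun _ => 1)); last first.
    move=> c _; rewrite /dot big1 // => i _; by rewrite ffunE andbF.
  by rewrite sumr_const card_B.
have [i ei] : exists i, e i.
  apply/existsP; apply: contraNT ne; rewrite negb_exists => /forallP h.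
  by apply/eqP/ffunP => j; rewrite ffunE; exact/negbTE/h.
pose fl (c : {ffun 'I_k -> bool}) : {ffun 'I_k -> bool} :=
  [ffun j => if j == i then ~~ c j else c j].
have flK : involutive fl.
  by move=> c; apply/ffunP => j; rewrite !ffunE; case: eqP => // ->; rewrite negbK.
have hd c : dot (fl c) e = ~~ dot c e.
  rewrite /dot (bigD1 i) //= [in RHS](bigD1 i) //= !ffunE eqxx ei !andbT.
  rewrite (eq_bigr (fun j => c j && e j)); first by rewrite addNb.
  by move=> j hj; rewrite ffunE (negbTE hj).
pose S := \sum_c sg (dot c e).
have : S = - S.
  rewrite {1}/S (reindex_inj (can_inj flK)) /= /S -sumrN; apply: eq_bigr => c _.
  by rewrite hd /sg signrN.
move=> h; have /eqP : S * 2 = 0 by rewrite mulr_natr mulr2n {1}h addNr.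
by rewrite mulf_eq0 orbF => /eqP.
Qed.


Lemma dot_xor c (d1 d2 : {ffun 'I_k -> bool}) : dot c [ffun j => d1 j (+) d2 j] = dot c d1 (+) dot c d2.
Proof.
rewrite /dot -big_split /=; apply: eq_bigr => j _; rewrite ffunE; by case: (c j).
Qed.


Lemma Tr0 : Tr 0 = 0.
Proof. by rewrite /Tr /tr1 big1 // => i _; rewrite expr0n expn_eq0. Qed.

Lemma dot_T c y : dot c (Tv y) = (Tr (sc c * y) != 0).
Proof.
rewrite /sc mulr_suml (big_morph (fun x => Tr x != 0) (id1 := false) (op1 := addb)).
- rewrite /dot [RHS]big_mkcond /=; apply: eq_bigr => i _; rewrite ffunE; by case: (c i).
- by move=> a b; exact: (Tr_bool hL' hn).
- by rewrite Tr0 eqxx.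
Qed.


Lemma sc_K c : sc c ^+ (2 ^ (2 * k)) = sc c.
Proof. by rewrite /sc (frob_sum hL' hn); apply: eq_bigr => i _; rewrite hu. Qed.

Lemma fourier (G : ('I_k -> bool) -> bool) (t : 'I_k -> bool) :
  \sum_y sg (g y) * sg (G (fun j => (Tr (u j * y) != 0) (+) t j)) = Wg0 * sg (G t).
Proof.
pose H (d : {ffun 'I_k -> bool}) := sg (G (fun j => d j (+) t j)).
have Hsel (d0 : {ffun 'I_k -> bool}) :
    \sum_d H d * (if d == d0 then (2 ^ k)%:R else 0) = H d0 * (2 ^ k)%:R.
  rewrite (bigD1 d0) //= eqxx big1 ?addr0 // => d hd.
  by rewrite (negbTE hd) mulr0.
have P1 y : sg (G (fun j => (Tr (u j * y) != 0) (+) t j)) * (2 ^ k)%:R =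
    \sum_d H d * \sum_c chi n (sc c * y) * sg (dot c d).
  have E d : \sum_c chi n (sc c * y) * sg (dot c d) =
      if d == Tv y then (2 ^ k)%:R else 0.
    have -> : (d == Tv y) = ([ffun j => Tv y j (+) d j] == [ffun => false]).
      apply/eqP/eqP => [->|/ffunP h]; first by apply/ffunP => j; rewrite !ffunE addbb.
      apply/ffunP => j; move: (h j); rewrite !ffunE.
      by case: (Tr (u j * y) != 0); case: (d j).
    rewrite -[RHS](sum_sg_dot [ffun j => Tv y j (+) d j]).
    apply: eq_bigr => c _.
    by rewrite dot_xor /sg signr_addb dot_T.
  under eq_bigr => d _ do rewrite E.
  rewrite Hsel /H; congr (sg (G _) * _).
  by apply: functional_extensionality => j; rewrite ffunE.
apply: (@mulIf _ ((2 ^ k)%:R)); first by rewrite Num.Theory.pnatr_eq0 expn_eq0.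
rewrite mulr_suml.
under eq_bigr => y _ do rewrite -mulrA P1 mulr_sumr.
rewrite exchange_big /=.
have E2 d : \sum_y sg (g y) * (H d * \sum_c chi n (sc c * y) * sg (dot c d)) =
    H d * Wg0 * (if d == [ffun => false] then (2 ^ k)%:R else 0).
  rewrite -sum_sg_dot mulr_sumr.
  under eq_bigr => y _ do rewrite mulr_sumr mulr_sumr.
  rewrite exchange_big /=; apply: eq_bigr => c _.
  rewrite -(Wg_K (sc_K c)) mulr_sumr mulr_suml; apply: eq_bigr => y _.
  by move: (sg (g y)) (H d) (chi n (sc c * y)) (sg (dot c d)) => A B C D; ring.
under eq_bigr => d _ do rewrite E2 -mulrA mulrCA.
rewrite -mulr_sumr.
rewrite (eq_bigr (fun d => H d * (if d == [ffun => false] then (2 ^ k)%:R else 0))); last first.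
  by [].
rewrite Hsel mulrA /H; congr (_ * sg (G _) * _).
by apply: functional_extensionality => j; rewrite ffunE.
Qed.


Lemma walsh_comp (G : ('I_k -> bool) -> bool) a :
  exists z, walsh n (fun x => g x (+) G (fun j => Tr (u j * x) != 0)) a =
    sg (g z) * (Wg0 * sg (G (fun j => Tr (u j * z) != 0))).
Proof.
have [Li LK KL] := injF_bij Lz_inj.
exists (Li a); rewrite walshE -{1}(KL a).
rewrite walsh_shift; congr (_ * _).
rewrite -fourier; apply: eq_bigr => y _; congr (_ * sg (G _)).
apply: functional_extensionality => j.
by rewrite mulrDr (Tr_bool hL' hn).
Qed.


Lemma Wg0_sq : Wg0 ^+ 2 = ((2 ^ (2 * k))%:R : int) ^+ 2.
Proof.
have P := parseval hL' hn g.
have E a : walsh n g a ^+ 2 = Wg0 ^+ 2.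
  have -> : walsh n g a = walsh n (fun x => g x (+) (fun _ => false) (fun j => Tr (u j * x) != 0)) a.
    by apply: eq_bigr => x _; rewrite addbF.
  have [z ->] := walsh_comp (fun _ => false) a.
  rewrite /sg expr0 mulr1 exprMn -/(sg _) expr2 sg_sq mul1r //.
rewrite (eq_bigr (fun _ => Wg0 ^+ 2)) in P; last by move=> a _; exact: E.
move: P; rewrite sumr_const (@eq_card _ _ L) // hL' -mulr_natr => P.
have h2 : ((2 ^ n)%:R : int) != 0 by rewrite Num.Theory.pnatr_eq0 expn_eq0.
apply: (mulIf h2); rewrite mulr_natr P -natrX -!natrM; rewrite !mul1r -[LHS]natrM; congr (_%:R).
by rewrite -expnM -!expnD /n; congr (2 ^ _)%N; lia.
Qed.


Lemma plateaued_comp (G : ('I_k -> bool) -> bool) :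
  plateaued n (fun x => g x (+) G (fun j => Tr (u j * x) != 0)).
Proof.
exists (2 * k)%N; split; first by rewrite /n; lia.
split; first by rewrite /n; lia.
move=> a; right.
have [z ->] := walsh_comp G a.
have := Wg0_sq => /eqP; rewrite eqf_sqr => /orP[] /eqP ->;
  case: (g z); case: (G _); rewrite /sg ?expr0 ?expr1 natz;
  rewrite ?mulr1 ?mul1r ?mulN1r ?mulrN1 ?opprK; tauto.
Qed.


End Main.

Lemma exists_U (L : finFieldType) (k : nat) : (0 < k)%N -> #|L| = (2 ^ (4 * k))%N ->
  exists x : L, [/\ x != 1, x ^+ (2 ^ (2 * k)) = x & x ^+ (2 ^ k + 1) = 1].
Proof.
move=> hk hL.
set a := (2 ^ k)%N.
have ha : (2 <= a)%N by rewrite /a -{1}(expn1 2) leq_exp2l.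
set b := a.-1.
have hab : a = b.+1 by rewrite /b prednK // (leq_trans _ ha).
have hb : (1 <= b)%N by rewrite /b -ltnS -hab.
set m := (b * (a ^ 2 + 1))%N.
have h4 : (2 ^ (4 * k) = a ^ 4)%N by rewrite /a -expnM mulnC.
have h2 : (2 ^ (2 * k) = a ^ 2)%N by rewrite /a -expnM mulnC.
have e1 : (m * (a + 1) + 1 = a ^ 4)%N by rewrite /m hab; ring.
have e2 : (a ^ 2 = b * (a + 1) + 1)%N by rewrite hab; ring.
have card4 (y : L) : y ^+ (a ^ 4) = y by rewrite -h4 -hL expf_card.
have [y /andP[y0 ym]] : exists y : L, (y != 0) && (y ^+ m != 1).
  apply/existsP; apply: contraT; rewrite negb_exists => /forallP hall.
  have rt (x : L) : x ^+ m.+1 = x.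
    case: (eqVneq x 0) => [->|x0]; first by rewrite expr0n.
    by have := hall x; rewrite x0 /= negbK => /eqP h; rewrite exprSr h mul1r.
  pose p : {poly L} := 'X^(m.+1) - 'X.
  have mpos : (0 < m)%N by rewrite /m muln_gt0 hb addn1.
  have sp : size p = m.+2.
    rewrite /p size_addl size_polyXn // size_opp size_polyX ltnS ltnS //.
  have := @max_poly_roots _ p (enum L).
  rewrite -size_poly_eq0 sp enum_uniq -cardE hL /= => /(_ isT).
  have -> : all (root p) (enum L).
    by apply/allP => x _; rewrite /root /p hornerD hornerN hornerXn hornerX rt subrr.
  move=> /(_ isT); rewrite h4 ltnS -e1.
  move/(_ isT); have : (0 < m * a)%N by rewrite muln_gt0 mpos (leq_trans _ ha).
  lia.
exists (y ^+ m).
have hx : y ^+ m ^+ (a + 1) = 1.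
  apply: (mulIf y0); rewrite mul1r -exprM -exprSr -addn1 e1 card4 //.
split => //.
  by rewrite h2 e2 exprD expr1 exprM exprAC hx expr1n mul1r.
Qed.


Unset Implicit Arguments. Set Strict Implicit.

Theorem corollary8 (L : finFieldType) (k t : nat)
  (hk : (2 <= k)%N) (ht : (0 < t)%N)
  (hL : #|L| = (2 ^ (4 * k))%N)
  (u : 'I_k -> L)
  (hu : forall i, u i != 0 /\ u i ^+ (2 ^ (2 * k)) = u i)
  (huij : forall i j : 'I_k, (i < j)%N ->
     u i * u j ^+ (2 ^ k) != 0 /\
     (u i * u j ^+ (2 ^ k)) ^+ (2 ^ k) = u i * u j ^+ (2 ^ k))
  (w : L)
  (hw : w ^+ (2 ^ (2 * k)) = w /\ w ^+ (2 ^ k + 1) = 1 /\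
        forall x : L, x ^+ (2 ^ (2 * k)) = x -> x ^+ (2 ^ k + 1) = 1 ->
          exists j : nat, x = w ^+ j)
  (F : 'I_t -> {mpoly 'F_2[k]}) (hF : forall i, reduced (F i)) :
  Hhat_vplateaued (4 * k) k w (fun i => fF (4 * k) u (F i)) <->
  vplateaued (4 * k) (fun i => fF (4 * k) u (F i)).
Proof.
have hk1 : (0 < k)%N by apply: leq_trans hk.
case: hw => hw1 [hw2 hwgen].
have hw3 : w != 1.
  have [x [x1 xK xU]] := exists_U hk1 hL.
  apply/eqP => w1; have [j xj] := hwgen x xK xU.
  by rewrite xj w1 expr1n eqxx in x1.
have hu2 i : u i ^+ (2 ^ (2 * k)) = u i by case: (hu i).
set fs := fun i => fF (4 * k) u (F i).
have comp0 v : Hhat_component (4 * k) k w fs 0 v = bcomb v fs.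
  apply: functional_extensionality => x; rewrite /Hhat_component mul0r /tr1 big1 ?eqxx //.
  by move=> i _; rewrite expr0n expn_eq0.
split.
- move=> H v hv; rewrite -comp0; apply: H; last by right.
  by rewrite expr0n expn_eq0.
- move=> H lam v hl hlv.
  case: (eqVneq lam 0) => [l0|l0].
    subst lam; rewrite comp0; apply: H.
    by case: hlv => //; rewrite eqxx.
  have P := plateaued_comp hk1 hL hw1 hw2 hw3 hl l0 hu2
    (fun d => \big[addb/false]_(i < t) (v i && ((F i).@[fun j => ((d j : bool)%:R : 'F_2)] != 0))).
  have -> : Hhat_component (4 * k) k w fs lam v =
      (fun x => g k w lam x (+) (fun d => \big[addb/false]_(i < t)
          (v i && ((F i).@[fun j => ((d j : bool)%:R : 'F_2)] != 0)))
          (fun j => Tr (4 * k) (u j * x) != 0)).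
    apply: functional_extensionality => x.
    rewrite /Hhat_component (trrelE hk1 hL _ hl) /g /Q /cc mulrA.
    by [].
  exact: P.
Qed.
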